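(* Let $n$ be odd. Then there exist $p\in\mathcal{P}$ and a $2n$-cycle $\varphi\in G^*$ such that $\mathrm{Stab}_{G^*}(p)=\langle\varphi\rangle$ and $\mathrm{Rank}_{p(z)}(\varphi^n(z))=n$ for every $z\in I$.
   Context: Fix $n\ge 2$, $W=\{1,\dots,n\}$, $M=\{n+1,\dots,2n\}$, $I=W\cup M$. Permutations compose right-to-left. A preference profile is a function $p$ on $I$ assigning to each $x\in W$ a linear order $p(x)$ on $M$ and to each $y\in M$ a linear order $p(y)$ on $W$; $\mathcal{P}$ is the set of preference profiles. For a linear order $R$ on $X$ and $a\in X$, $\mathrm{Rank}_R(a)=|\{b\in X:b\succeq_R a\}|$. $G^*=\{\varphi\in\mathrm{Sym}(I):\{\varphi(W),\varphi(M)\}=\{W,M\}\}$. For a linear order $R$ on $X\subseteq I$ and $\varphi\in\mathrm{Sym}(I)$, $\varphi R$ is the relation on $\varphi(X)$ with $(a,b)\in\varphi R$ iff $(\varphi^{-1}(a),\varphi^{-1}(b))\in R$. For $\varphi\in G^*$, $p^\varphi(z)=\varphi\,p(\varphi^{-1}(z))$, and $\mathrm{Stab}_{G^*}(p)=\{\varphi\in G^*:p^\varphi=p\}$. *)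

(* Defs.v *)
From mathcomp Require Import all_boot all_fingroup.
Set Implicit Arguments.
Unset Strict Implicit.
Unset Printing Implicit Defensive.
Import GroupScope.

(* Agents I = {1..2n} are modelled as 'I_(2*n) = {0..2n-1}:
   W = {0..n-1} (paper's {1..n}), M = {n..2n-1} (paper's {n+1..2n}). *)
Definition agent (n : nat) := 'I_(2 * n).

Definition Wset (n : nat) : {set agent n} := [set i : agent n | (i < n)%N].
Definition Mset (n : nat) : {set agent n} := [set i : agent n | (n <= i)%N].

(* A binary relation on I is a finite set of pairs; (a, b) \in R means a R b,
   i.e. a is weakly preferred to b (a >=_R b). *)
Definition relI (n : nat) := {set agent n * agent n}.

Definition linear_order_on (n : nat) (X : {set agent n}) (R : relI n) : Prop :=
  [/\ R \subset setX X X,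
      (forall a, a \in X -> (a, a) \in R),
      (forall a b, (a, b) \in R -> (b, a) \in R -> a = b),
      (forall a b c, (a, b) \in R -> (b, c) \in R -> (a, c) \in R) &
      (forall a b, a \in X -> b \in X -> ((a, b) \in R) || ((b, a) \in R))].

Definition profile (n : nat) := {ffun agent n -> relI n}.

Definition is_profile (n : nat) (p : profile n) : Prop :=
  (forall x, x \in Wset n -> linear_order_on (Mset n) (p x)) /\
  (forall y, y \in Mset n -> linear_order_on (Wset n) (p y)).

Definition Rank (n : nat) (R : relI n) (a : agent n) : nat :=
  #|[set b : agent n | (b, a) \in R]|.

Definition Gstar (n : nat) : {set {perm agent n}} :=
  [set phi : {perm agent n} |
     [set phi @: Wset n; phi @: Mset n] == [set Wset n; Mset n]].

Definition act_rel (n : nat) (phi : {perm agent n}) (R : relI n) : relI n :=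
  [set ab : agent n * agent n | ((phi^-1) ab.1, (phi^-1) ab.2) \in R].

Definition act_profile (n : nat) (p : profile n) (phi : {perm agent n})
  : profile n :=
  [ffun z => act_rel phi (p ((phi^-1) z))].

Definition Stab (n : nat) (p : profile n) : {set {perm agent n}} :=
  [set phi in Gstar n | act_profile p phi == p].

Definition is_kcycle (T : finType) (k : nat) (phi : {perm T}) : Prop :=
  exists x, #|porbit phi x| = k /\ (forall y, y \notin porbit phi x -> phi y = y).

(* Main.v *)
Require Import Defs.
From mathcomp Require Import all_boot all_fingroup.
From mathcomp Require Import zify.
Set Implicit Arguments.
Unset Strict Implicit.
Unset Printing Implicit Defensive.

Definition pos (n : nat) (a : agent n) : nat :=
  if (a < n)%N then 2 * a else (2 * (a - n)).+1.
Lemma pos_lt n (a : agent n) : (pos a < 2 * n)%N.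
Proof. rewrite /pos; have := ltn_ord a; case: ifP => /= ?; lia. Qed.
Lemma pos_inj n : injective (@pos n).
Proof.
move=> a b; rewrite /pos => h; apply/val_inj => /=.
have := ltn_ord a; have := ltn_ord b.
move: h; case: ifP; case: ifP => ? ? h; lia.
Qed.
Lemma odd_pos n (a : agent n) : odd (pos a) = ~~ (a < n)%N.
Proof. rewrite /pos; case: ifP => _ /=; by rewrite oddM. Qed.

Definition phif n (a : agent n) : agent n :=
  insubd a (if (a < n)%N then a + n else (a - n).+1 %% n).

Lemma pos_phif n (a : agent n) : pos (phif a) = (pos a).+1 %% (2 * n).
Proof.
have ha := ltn_ord a.
rewrite /phif /pos val_insubd; case: (ltnP a n) => h.
  have h1 : a + n < 2 * n by lia.
  have h2 : (a + n < n) = false by lia.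
  rewrite h1 h2 modn_small; lia.
case: (ltnP (a - n).+1 n) => h2.
  rewrite modn_small //.
  have h1 : (a - n).+1 < 2 * n by lia.
  rewrite h1 h2 modn_small; lia.
have e : (a - n).+1 = n by lia.
rewrite e modnn.
have h1 : 0 < 2 * n by lia.
have h3 : 0 < n by lia.
rewrite h1 h3.
have -> : (2 * (a - n)).+2 = 2 * n by lia.
by rewrite modnn.
Qed.

Lemma phif_inj n : injective (@phif n).
Proof.
move=> a b h; have := congr1 (@pos n) h; rewrite !pos_phif -[(pos a).+1]addn1 -[(pos b).+1]addn1 => /eqP.
rewrite eqn_modDr (modn_small (pos_lt a)) (modn_small (pos_lt b)) => /eqP.
exact: pos_inj.
Qed.

Definition phi n : {perm agent n} := perm (@phif_inj n).

Lemma pos_phiX n m (a : agent n) : pos ((phi n ^+ m)%g a) = (pos a + m) %% (2 * n).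
Proof.
elim: m => [|m IH]; first by rewrite expg0 perm1 addn0 modn_small ?pos_lt.
rewrite expgSr permM /phi permE pos_phif IH.
by rewrite -[(_ %% _).+1]addn1 modnDml addn1 addnS.
Qed.

Definition off n (a b : agent n) : nat := (pos b + 2 * n - pos a) %% (2 * n).

Lemma off_lt n (a b : agent n) : off a b < 2 * n.
Proof. rewrite /off ltn_mod; have := pos_lt a; lia. Qed.

Lemma off_spec n (a b : agent n) : (pos a + off a b) %% (2 * n) = pos b.
Proof.
rewrite /off modnDmr.
have := pos_lt a; have := pos_lt b => ha hb.
have -> : pos a + (pos b + 2 * n - pos a) = pos b + 2 * n by lia.
by rewrite modnDr modn_small.
Qed.

Lemma off_uniq n (a b : agent n) d : d < 2 * n -> (pos a + d) %% (2 * n) = pos b -> off a b = d.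
Proof.
move=> hd h; have := off_spec a b; rewrite -h => /eqP.
by rewrite eqn_modDl (modn_small hd) (modn_small (off_lt a b)) => /eqP.
Qed.

Lemma off_phiX n m (a b : agent n) : off ((phi n ^+ m)%g a) ((phi n ^+ m)%g b) = off a b.
Proof.
apply: off_uniq; first exact: off_lt.
rewrite !pos_phiX modnDml -addnA [m + _]addnC addnA -modnDml off_spec.
by [].
Qed.

Lemma off_self n m (a : agent n) : off a ((phi n ^+ m)%g a) = m %% (2 * n).
Proof.
apply: off_uniq; first by rewrite ltn_mod; have := pos_lt a; lia.
by rewrite pos_phiX modnDmr.
Qed.

Lemma odd_off n (a b : agent n) : odd (off a b) = (a < n) (+) (b < n).
Proof.
have := congr1 odd (off_spec a b).
rewrite odd_mod; last by rewrite oddM.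
rewrite oddD !odd_pos.
by case: (a < n); case: (b < n); case: (odd (off a b)).
Qed.

Definition key n d : nat := if d == n then 2 * n else d.

Lemma key_inj n d1 d2 : d1 < 2 * n -> d2 < 2 * n -> key n d1 = key n d2 -> d1 = d2.
Proof.
rewrite /key => h1 h2; case: eqP => e1; case: eqP => e2 h; lia.
Qed.

Lemma key_le n d : d < 2 * n -> key n d <= 2 * n.
Proof. rewrite /key; case: eqP => _ h; lia. Qed.

Definition prof n : profile n :=
  [ffun z => [set bc : agent n * agent n | [&& odd (off z bc.1), odd (off z bc.2) &
                 key n (off z bc.1) <= key n (off z bc.2)]]].

Lemma in_prof n (z b c : agent n) : ((b, c) \in prof n z) =
  [&& odd (off z b), odd (off z c) & key n (off z b) <= key n (off z c)].
Proof. by rewrite ffunE inE. Qed.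

Lemma lin n (z : agent n) (X : {set agent n}) :
  (forall b, (b \in X) = odd (off z b)) -> linear_order_on X (prof n z).
Proof.
move=> hX; split.
- apply/subsetP => -[b c]; rewrite in_prof => /and3P[h1 h2 _].
  by rewrite inE /= !hX h1 h2.
- by move=> a; rewrite hX in_prof => ->; rewrite leqnn.
- move=> a b; rewrite !in_prof => /and3P[_ _ h1] /and3P[_ _ h2].
  have : key n (off z a) = key n (off z b) by apply/eqP; rewrite eqn_leq h1 h2.
  move/key_inj => /(_ (off_lt _ _) (off_lt _ _)) e.
  by apply: pos_inj; rewrite -(off_spec z a) -(off_spec z b) e.
- move=> a b c; rewrite !in_prof => /and3P[-> _ h1] /and3P[_ -> h2] /=.
  exact: leq_trans h1 h2.
- move=> a b; rewrite !hX !in_prof => -> -> /=; exact: leq_total.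
Qed.

Lemma prof_ok n : is_profile (prof n).
Proof.
split=> x; rewrite inE => hx; apply: lin => b; rewrite inE odd_off.
  by rewrite hx /= leqNgt.
by rewrite [x < n]ltnNge hx.

Qed.

Lemma side_phiX n m (a : agent n) : ((phi n ^+ m)%g a < n) = (a < n) (+) odd m.
Proof.
have := odd_pos ((phi n ^+ m)%g a); rewrite pos_phiX odd_mod ?oddM // oddD odd_pos.
move=> h; apply: negb_inj; rewrite -h; by case: (a < n); case: (odd m).
Qed.

Lemma imset_side n (s : {perm agent n}) c :
  (forall a, (s a < n) = (a < n) (+) c) ->
  (s @: Wset n) = (if c then Mset n else Wset n) /\
  (s @: Mset n) = (if c then Wset n else Mset n).
Proof.
move=> h; rewrite !(can_imset_pre _ (permK s)); split; apply/setP => y;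
  rewrite !inE; have := h (s^-1%g y); rewrite permKV => e; clear h.
  case: c e => e; rewrite /Mset /Wset inE ?[n <= _]leqNgt;
  by move: e; case: (y < n); case: (s^-1%g y < n).
case: c e => e; rewrite /Mset /Wset inE ?[n <= _]leqNgt ?[n <= _]leqNgt;
by move: e; case: (y < n); case: (s^-1%g y < n).
Qed.

Lemma phiX_Gstar n m : (phi n ^+ m)%g \in Gstar n.
Proof.
rewrite inE; have [-> ->] := imset_side (side_phiX (n := n) m).
by case: (odd m); rewrite // setUC.
Qed.

Lemma off_inv n m (u v : agent n) :
  off (((phi n ^+ m)^-1)%g u) (((phi n ^+ m)^-1)%g v) = off u v.
Proof. by rewrite -(off_phiX m) !permKV. Qed.

Lemma phiX_stab n m : ((phi n ^+ m)%g \in Stab (prof n)).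
Proof.
rewrite inE phiX_Gstar /=; apply/eqP/ffunP => z.
rewrite !ffunE; apply/setP => -[a b].
by rewrite /act_rel inE /= !inE /= !off_inv.
Qed.

Lemma phi1 n (z : agent n) : phi n z = (phi n ^+ 1)%g z.
Proof. by rewrite expg1. Qed.

Lemma off_phi1 n (z : agent n) : 2 <= n -> off z (phi n z) = 1.
Proof. by move=> h; rewrite phi1 off_self modn_small //; lia. Qed.

Lemma phi_first n (z b : agent n) : 2 <= n -> odd (off z b) -> (phi n z, b) \in prof n z.
Proof.
move=> h ho; rewrite in_prof off_phi1 // ho /= /key.
have -> : (1 == n) = false by apply/eqP; lia.
case: eqP => _; first lia.
by move: ho; case: (off z b).
Qed.

Lemma top2 n (z c : agent n) : 2 <= n -> (c, phi n z) \in prof n z -> c = phi n z.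
Proof.
move=> h; rewrite in_prof off_phi1 // => /and3P[ho _ hk].
have hk1 : key n (off z c) = key n 1.
  apply/eqP; rewrite eqn_leq hk /key.
  have -> : (1 == n) = false by apply/eqP; lia.
  case: eqP => _; first lia.
  by move: ho; case: (off z c).
have := key_inj (off_lt z c) _ hk1; rewrite (_ : 1 < 2 * n); last lia.
move=> /(_ isT) e.
apply: pos_inj; rewrite -(off_spec z c) -(off_spec z (phi n z)) e off_phi1 //.
Qed.

Lemma stab_comm n (psi : {perm agent n}) : 2 <= n -> psi \in Stab (prof n) ->
  forall z, psi (phi n z) = phi n (psi z).
Proof.
move=> h; rewrite inE => /andP[_ /eqP hp] z.
have E : forall a b, ((a, b) \in prof n (psi z)) = ((psi^-1%g a, psi^-1%g b) \in prof n z).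
  move=> a b; rewrite -{1}hp ffunE /act_rel inE /= permK.
  by [].
have hb : (psi (phi n z), psi (phi n z)) \in prof n (psi z).
  rewrite E !permK; apply: phi_first => //; rewrite odd_off.
  have := side_phiX 1 z; rewrite expg1 => ->; by rewrite addbA addbb.
have hodd : odd (off (psi z) (psi (phi n z))) by move: hb; rewrite in_prof => /andP[].
have := phi_first h hodd; rewrite E permK => /(top2 h) e.
by rewrite -e permKV.
Qed.

Lemma phiX_off n (x a : agent n) : (phi n ^+ off x a)%g x = a.
Proof. by apply: pos_inj; rewrite pos_phiX off_spec. Qed.

Lemma comm_pow n (psi : {perm agent n}) :
  (forall z, psi (phi n z) = phi n (psi z)) ->
  forall k z, psi ((phi n ^+ k)%g z) = (phi n ^+ k)%g (psi z).
Proof.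
move=> hc; elim=> [|k IH] z; first by rewrite !expg0 !perm1.
by rewrite expgSr !permM /= hc IH /phi.
Qed.

Lemma stab_eq n : 2 <= n -> Stab (prof n) = <[phi n]>%g.
Proof.
move=> h; apply/eqP; rewrite eqEsubset; apply/andP; split; last first.
  by apply/subsetP => x /cycleP[m ->]; apply: phiX_stab.
apply/subsetP => psi hpsi.
have x0 : agent n by exists 0; lia.
have hc := comm_pow (stab_comm h hpsi).
apply/cycleP; exists (off x0 (psi x0)); apply/permP => a.
rewrite -(phiX_off x0 a) hc phiX_off.
rewrite -{1}(phiX_off x0 (psi x0)) -{2}(phiX_off x0 a) -!permM -!expgD addnC.
by [].
Qed.

Lemma card_W n : #|Wset n| = n.
Proof.
have le : n <= 2 * n by lia.
have -> : Wset n = [set widen_ord le i | i in 'I_n].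
  apply/setP => y; rewrite inE; apply/idP/imsetP.
    by move=> hy; exists (Ordinal hy) => //; apply/val_inj.
  by case=> i _ ->; rewrite /= ltn_ord.
rewrite card_imset ?card_ord //.
by move=> i j /(congr1 val) /= /val_inj.
Qed.

Lemma card_M n : #|Mset n| = n.
Proof.
have -> : Mset n = ~: Wset n by apply/setP => y; rewrite !inE leqNgt.
have := cardsC (Wset n); rewrite card_W card_ord; lia.
Qed.

Lemma kcyc n : 2 <= n -> is_kcycle (2 * n) (phi n).
Proof.
move=> h; have x0 : agent n by exists 0; lia.
have hall : porbit (phi n) x0 = setT.
  apply/setP => a; rewrite inE; apply/porbitP; exists (off x0 a).
  by rewrite phiX_off.
exists x0; split; first by rewrite hall cardsT card_ord.
by move=> y; rewrite hall inE.
Qed.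

Lemma rank_ok n (z : agent n) : 2 <= n -> odd n -> Rank (prof n z) ((phi n ^+ n)%g z) = n.
Proof.
move=> h ho; rewrite /Rank.
have -> : [set b | (b, (phi n ^+ n)%g z) \in prof n z] = [set b | odd (off z b)].
  apply/setP => b; rewrite !inE in_prof off_self modn_small; last lia.
  rewrite ho /= {2}/key eqxx key_le ?andbT //; exact: off_lt.
case hz: (z < n).
  apply: etrans _ (card_M n); apply: eq_card => b; rewrite !inE odd_off hz.
  by rewrite [n <= b]leqNgt; case: (b < n).
apply: etrans _ (card_W n); apply: eq_card => b; rewrite !inE odd_off hz.
by case: (b < n).
Qed.

Theorem proposition17 (n : nat) (hn : (2 <= n)%N) (hodd : odd n) :
  exists (p : profile n) (phi : {perm agent n}),
    [/\ is_profile p,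
        phi \in Gstar n,
        is_kcycle (2 * n) phi,
        Stab p = <[phi]>%g &
        forall z : agent n, Rank (p z) ((phi ^+ n)%g z) = n].
Proof.
exists (prof n), (phi n); split.
- exact: prof_ok.
- by have := phiX_Gstar n 1; rewrite expg1.
- exact: kcyc.
- exact: stab_eq.
- by move=> z; apply: rank_ok.
Qed.
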